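(* Let $G$ be a finite group, $\xi$ a linear character of $G$, and $\varepsilon$ either the trivial or the sign character of $S_2$. Let $SG_2=G\wr S_2$ and $HG_1=\{(g,g;\sigma)\mid g\in G,\sigma\in S_2\}\subset SG_2$, and let $\xi\otimes\varepsilon$ be the linear character $(g,g;\sigma)\mapsto\xi(g)\varepsilon(\sigma)$ of $HG_1$. Then $(\xi\otimes\varepsilon)\uparrow_{HG_1}^{SG_2}$ is multiplicity-free, i.e. $(SG_2,HG_1,\xi\otimes\varepsilon)$ is a Gelfand triple.
   Context: $G\wr S_2=\{(g_1,g_2;\sigma)\mid g_i\in G,\sigma\in S_2\}$ with multiplication $(g_1,g_2;\sigma)(h_1,h_2;\tau)=(g_1h_{\sigma^{-1}(1)},g_2h_{\sigma^{-1}(2)};\sigma\tau)$. A Gelfand triple $(G,H,\phi)$ means the induced representation $\phi\uparrow_H^G$ is multiplicity-free. *)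

(* Defs.v *)
From HB Require Import structures.
From mathcomp Require Import all_boot all_order all_algebra all_fingroup all_solvable all_field all_character.
Set Implicit Arguments. Unset Strict Implicit. Unset Printing Implicit Defensive.
Import GroupScope.

(* The wreath product G \wr S_2, realised on the carrier
   {ffun 'I_2 -> gT} * 'S_2 (for the finite group G = [set: gT]).
   An element (f; s) stands for (f 0, f 1; s).  The paper's product is
     (g_1,g_2;s)(h_1,h_2;t) = (g_1 h_{s^-1(1)}, g_2 h_{s^-1(2)}; s t)
   with s t the composite s o t.  In MathComp, (t * s) x = s (t x), so the
   composite s o t is written (t * s)%g. *)
Definition wreath2 (gT : finGroupType) := ({ffun 'I_2 -> gT} * 'S_2)%type.

HB.instance Definition _ (gT : finGroupType) := Finite.on (wreath2 gT).

Section Wreath.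
Variable gT : finGroupType.
Implicit Types x y z : wreath2 gT.

Definition wmul x y : wreath2 gT :=
  ([ffun i => x.1 i * y.1 (x.2^-1 i)], (y.2 * x.2)%g).
Definition wone : wreath2 gT := ([ffun _ => 1], 1%g).
Definition winv x : wreath2 gT := ([ffun i => (x.1 (x.2 i))^-1], (x.2^-1)%g).

Lemma wmulA : associative wmul.
Proof.
move=> [f s] [h t] [k r]; rewrite /wmul /=; congr pair; last by rewrite mulgA.
apply/ffunP=> i; rewrite !ffunE mulgA; congr (_ * _).
by rewrite invMg permM.
Qed.

Lemma wmul1 : left_id wone wmul.
Proof.
move=> [f s]; rewrite /wmul /wone /=; congr pair; last by rewrite mulg1.
by apply/ffunP=> i; rewrite !ffunE mul1g invg1 perm1.
Qed.

Lemma wmulV : left_inverse wone winv wmul.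
Proof.
move=> [f s]; rewrite /wmul /wone /winv /=; congr pair; last by rewrite mulgV.
by apply/ffunP=> i; rewrite !ffunE invgK mulVg.
Qed.

End Wreath.

HB.instance Definition _ (gT : finGroupType) :=
  Finite_isGroup.Build (wreath2 gT) (@wmulA gT) (@wmul1 gT) (@wmulV gT).

Lemma wreath2_mulE (gT : finGroupType) (x y : wreath2 gT) :
  (x * y)%g = ([ffun i => x.1 i * y.1 (x.2^-1 i)], (y.2 * x.2)%g).
Proof. by []. Qed.

Definition HG1_set (gT : finGroupType) : {set wreath2 gT} :=
  [set x : wreath2 gT | x.1 ord0 == x.1 ord_max].

Lemma HG1_group_set (gT : finGroupType) : group_set (HG1_set gT).
Proof.
apply/group_setP; split; first by rewrite inE /= !ffunE.
move=> [f s] [h t]; rewrite !inE /= => /eqP ef /eqP eh.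
rewrite !ffunE ef; apply/eqP; congr (_ * _).
have h2 : forall i : 'I_2, h i = h ord0.
  move=> i; have [->|] := eqVneq i ord0; first by [].
  move=> ne; have -> : i = ord_max by apply/val_inj; case: i ne => [[|[|]]] //= ? _; rewrite -(inj_eq val_inj).
  by rewrite eh.
by rewrite !h2.
Qed.

Canonical HG1 (gT : finGroupType) : {group wreath2 gT} := Group (HG1_group_set gT).

Definition trivial_S2 (s : 'S_2) : algC := 1%R.
Definition sign_S2 (s : 'S_2) : algC := ((-1) ^+ odd_perm s)%R.

(* Main.v *)
Require Import Defs.
From HB Require Import structures.
From mathcomp Require Import all_boot all_order all_algebra all_fingroup all_solvable all_field all_character.
Import GroupScope GRing.Theory Num.Theory.
Local Open Scope ring_scope.
Import Order.TTheory.
Set Implicit Arguments. Unset Strict Implicit.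

Lemma ord2_cases (i : 'I_2) : i = ord0 \/ i = ord_max.
Proof. by case: i => [[|[|]]] //= ?; [left|right]; apply/val_inj. Qed.

Lemma wmulE1 (gT : finGroupType) (x y : wreath2 gT) i :
  (x * y)%g.1 i = (x.1 i * y.1 (x.2^-1 i))%g.
Proof. by rewrite wreath2_mulE /= ffunE. Qed.
Lemma wmulE2 (gT : finGroupType) (x y : wreath2 gT) :
  (x * y)%g.2 = (y.2 * x.2)%g.
Proof. by []. Qed.
Lemma winvE2 (gT : finGroupType) (x : wreath2 gT) : (x^-1)%g.2 = (x.2^-1)%g.
Proof. by []. Qed.
Lemma wone1 (gT : finGroupType) i : (1 : wreath2 gT)%g.1 i = 1%g.
Proof. by rewrite /= ffunE. Qed.
Lemma wone2 (gT : finGroupType) : (1 : wreath2 gT)%g.2 = 1%g.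
Proof. by []. Qed.

Definition Kset (gT : finGroupType) : {set wreath2 gT} := [set x | x.2 == 1%g].
Lemma K_group_set gT : group_set (Kset gT).
Proof.
apply/group_setP; split; first by rewrite inE.
by move=> x y; rewrite !inE wmulE2 => /eqP-> /eqP->; rewrite mulg1.
Qed.
Canonical KG gT := Group (K_group_set gT).

Lemma weq (gT : finGroupType) (x y : wreath2 gT) :
  (forall i, x.1 i = y.1 i) -> x.2 = y.2 -> x = y.
Proof. by case: x y => [f s] [h t] /= E ->; congr pair; apply/ffunP. Qed.

Definition K1set (gT : finGroupType) : {set wreath2 gT} :=
  [set x : wreath2 gT | (x.2 == 1%g) && (x.1 ord_max == 1%g)].
Definition K2set (gT : finGroupType) : {set wreath2 gT} :=
  [set x : wreath2 gT | (x.2 == 1%g) && (x.1 ord0 == 1%g)].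
Lemma K1_group_set gT : group_set (K1set gT).
Proof.
apply/group_setP; split; first by rewrite inE wone2 wone1 !eqxx.
move=> x y; rewrite !inE wmulE2 wmulE1 => /andP[/eqP x2 /eqP x1] /andP[/eqP y2 /eqP y1].
by rewrite x2 y2 invg1 perm1 ?x1 ?y1 !mulg1 !eqxx.
Qed.
Canonical K1G gT := Group (K1_group_set gT).
Lemma K2_group_set gT : group_set (K2set gT).
Proof.
apply/group_setP; split; first by rewrite inE wone2 wone1 !eqxx.
move=> x y; rewrite !inE wmulE2 wmulE1 => /andP[/eqP x2 /eqP x1] /andP[/eqP y2 /eqP y1].
by rewrite x2 y2 invg1 perm1 ?x1 ?y1 !mulg1 !eqxx.
Qed.
Canonical K2G gT := Group (K2_group_set gT).

Definition dg (gT : finGroupType) (g : gT) : wreath2 gT := ([ffun _ => g], 1%g).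
Definition e1 (gT : finGroupType) (g : gT) : wreath2 gT :=
  ([ffun i => if i == ord0 then g else 1%g], 1%g).
Definition e2 (gT : finGroupType) (g : gT) : wreath2 gT :=
  ([ffun i => if i == ord0 then 1%g else g], 1%g).

Lemma e1K1 (gT : finGroupType) (g : gT) : e1 g \in K1G gT.
Proof. by rewrite !inE /= !ffunE !eqxx. Qed.
Lemma e2K2 (gT : finGroupType) (g : gT) : e2 g \in K2G gT.
Proof. by rewrite !inE /= !ffunE !eqxx. Qed.

Lemma dg_e (gT : finGroupType) (g : gT) : dg g = (e1 g * e2 g)%g.
Proof.
apply: weq => [i|]; last by rewrite wmulE2 /= mulg1.
rewrite wmulE1 /= invg1 perm1 !ffunE.
by case: (ord2_cases i) => ->; rewrite ?mulg1 ?mul1g.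
Qed.

Lemma K1xK2 gT : K1G gT \x K2G gT = KG gT.
Proof.
rewrite dprodE.
- apply/eqP; rewrite eqEsubset mulG_subG; apply/andP; split.
    by apply/andP; split; apply/subsetP=> x; rewrite !inE => /andP[].
  apply/subsetP=> x; rewrite inE => /eqP x2.
  have -> : x = (e1 (x.1 ord0) * e2 (x.1 ord_max))%g.
    apply: weq => [i|]; last by rewrite wmulE2 x2 /= mulg1.
    rewrite wmulE1 /= invg1 perm1 !ffunE.
    by case: (ord2_cases i) => ->; rewrite ?mulg1 ?mul1g.
  by apply: mem_mulg; [apply: e1K1 | apply: e2K2].
- apply/centsP=> x; rewrite inE => /andP[/eqP x2 /eqP x0] y; rewrite inE => /andP[/eqP y2 /eqP y1].
  apply: weq => [i|]; last by rewrite !wmulE2 x2 y2.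
  rewrite !wmulE1 x2 y2 invg1 perm1.
  by case: (ord2_cases i) => ->; rewrite ?x0 ?y1 ?mulg1 ?mul1g.
- apply/trivgP/subsetP=> x; rewrite !inE => /andP[/andP[/eqP x2 /eqP a] /andP[_ /eqP b]].
  apply/eqP; apply: weq => [i|//]; rewrite wone1.
  by case: (ord2_cases i) => ->.
Qed.

Lemma p0M (gT : finGroupType) :
  {in K1G gT &, {morph (fun x : wreath2 gT => x.1 ord0) : x y / (x * y)%g}}.
Proof.
move=> x y; rewrite !inE => /andP[/eqP x2 _] _.
by rewrite /= wmulE1 x2 invg1 perm1.
Qed.
Canonical p0m (gT : finGroupType) := Morphism (@p0M gT).
Lemma p1M (gT : finGroupType) :
  {in K2G gT &, {morph (fun x : wreath2 gT => x.1 ord_max) : x y / (x * y)%g}}.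
Proof.
move=> x y; rewrite !inE => /andP[/eqP x2 _] _.
by rewrite /= wmulE1 x2 invg1 perm1.
Qed.
Canonical p1m (gT : finGroupType) := Morphism (@p1M gT).

Lemma iso1 (gT : finGroupType) : isom (K1G gT) [set: gT] (p0m gT).
Proof.
apply/isomP; split.
  apply/injmP=> x y; rewrite !inE => /andP[/eqP x2 /eqP x1] /andP[/eqP y2 /eqP y1] /= E.
  by apply: weq => [i|]; [case: (ord2_cases i) => ->; rewrite ?x1 ?y1 | rewrite x2 y2].
rewrite morphimEdom; apply/eqP; rewrite eqEsubset subsetT /=.
apply/subsetP=> g _; apply/imsetP; exists (e1 g); first exact: e1K1.
by rewrite /= ffunE eqxx.
Qed.
Lemma iso2 (gT : finGroupType) : isom (K2G gT) [set: gT] (p1m gT).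
Proof.
apply/isomP; split.
  apply/injmP=> x y; rewrite !inE => /andP[/eqP x2 /eqP x1] /andP[/eqP y2 /eqP y1] /= E.
  by apply: weq => [i|]; [case: (ord2_cases i) => ->; rewrite ?x1 ?y1 | rewrite x2 y2].
rewrite morphimEdom; apply/eqP; rewrite eqEsubset subsetT /=.
apply/subsetP=> g _; apply/imsetP; exists (e2 g); first exact: e2K2.
by rewrite /= ffunE.
Qed.

Lemma conjK (gT : finGroupType) (x y : wreath2 gT) :
  ((x ^ y)%g \in KG gT) = (x \in KG gT).
Proof.
rewrite !inE conjgE !wmulE2 winvE2.
apply/eqP/eqP=> [E|->]; last by rewrite mulg1 mulgV.
have : (y.2^-1 * (y.2 * x.2 * y.2^-1) * y.2)%g = x.2 by rewrite !mulgA mulVg mul1g mulgKV.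
by rewrite E mulg1 mulVg.
Qed.

Lemma cardK (gT : finGroupType) : #|KG gT| = (#|gT| ^ 2)%N.
Proof.
have -> : KG gT = [set (f, 1%g) | f : {ffun 'I_2 -> gT}] :> {set wreath2 gT}.
  apply/setP=> x; rewrite inE; apply/idP/imsetP => [/eqP x2 | [f _ ->]] //.
  by exists x.1; rewrite // -x2; case: x {x2}.
rewrite card_imset; last by move=> f h [].
by rewrite card_ffun card_ord.
Qed.

Lemma cardW (gT : finGroupType) : #|[set: wreath2 gT]| = (2 * #|gT| ^ 2)%N.
Proof.
by rewrite cardsT /wreath2 card_prod card_ffun card_ord card_Sn mulnC.
Qed.

Lemma Ind_out (gT : finGroupType) (th : 'CF(KG gT)) x :
  x \notin KG gT -> ('Ind[[set: wreath2 gT]] th) x = 0.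
Proof.
move=> xK; rewrite cfIndE ?subsetT // big1 ?mulr0 // => y _.
by rewrite cfun0 // conjK.
Qed.

Lemma dg_conj (gT : finGroupType) (th : 'CF(KG gT)) (g : gT) y :
  th ((dg g) ^ y)%g = th (dg g).
Proof.
pose w : wreath2 gT := ([ffun => 1%g], y.2).
have kK : (w^-1 * y)%g \in KG gT.
  by rewrite inE wmulE2 winvE2 /= mulgV.
have -> : y = (w * (w^-1 * y))%g by rewrite mulKVg.
rewrite conjgM.
have -> : ((dg g) ^ w)%g = dg g.
  rewrite conjgE; apply/(canLR (mulKg w)).
  apply: weq => [i|]; last by rewrite !wmulE2 /= mulg1 mul1g.
  by rewrite !wmulE1 /= !ffunE mulg1 mul1g.
by rewrite cfunJ.
Qed.

Lemma Ind_dg (gT : finGroupType) (th : 'CF(KG gT)) (g : gT) :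
  ('Ind[[set: wreath2 gT]] th) (dg g) = 2 * th (dg g).
Proof.
rewrite cfIndE ?subsetT //.
rewrite (eq_bigr (fun _ => th (dg g))); last by move=> y _; apply: dg_conj.
rewrite sumr_const cardW cardK -[th _ *+ _]mulr_natl natrM (mulrC 2%:R) -mulrA mulKf //.
by rewrite pnatr_eq0 expn_eq0 negb_and -lt0n; apply/orP; left; apply/card_gt0P; exists 1%g.
Qed.

Lemma ffun2_const (T : Type) (f : {ffun 'I_2 -> T}) :
  f ord0 = f ord_max -> f = [ffun => f ord0].
Proof. by move=> E; apply/ffunP=> i; rewrite ffunE; case: (ord2_cases i) => ->. Qed.

Lemma cardH (gT : finGroupType) : #|HG1 gT| = (2 * #|gT|)%N.
Proof.
have -> : HG1 gT = [set (([ffun => p.1] : {ffun 'I_2 -> gT}), p.2) | p : gT * 'S_2]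
   :> {set wreath2 gT}.
  apply/setP=> x; rewrite inE; apply/idP/imsetP => [/eqP x2 | [p _ ->]].
    exists (x.1 ord0, x.2) => //; case: x x2 => f s /= /ffun2_const <- //.
  by rewrite /= !ffunE.
rewrite card_imset; last first.
  by move=> [a s] [b t] [/ffunP/(_ ord0)]; rewrite !ffunE => -> ->.
by rewrite card_prod card_Sn mulnC.
Qed.

Lemma HK_dg (gT : finGroupType) : HG1 gT :&: KG gT = [set dg g | g : gT].
Proof.
apply/setP=> x; rewrite !inE; apply/andP/imsetP => [[/eqP x1 /eqP x2] | [g _ ->]].
  exists (x.1 ord0) => //; case: x x1 x2 => f s /= /ffun2_const E ->.
  by rewrite {1}E.
by rewrite /= !ffunE.
Qed.

Lemma dg_inj (gT : finGroupType) : injective (@dg gT).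
Proof. by move=> a b [/ffunP/(_ ord0)]; rewrite !ffunE. Qed.

Lemma dot_key (gT : finGroupType) (xi : 'CF([set: gT])) (eps : 'S_2 -> algC)
  (phi : 'CF(HG1 gT)) (th : 'CF(KG gT)) :
  eps 1%g = 1 ->
  (forall x : wreath2 gT, x \in HG1 gT -> phi x = xi (x.1 ord0) * eps x.2) ->
  '[phi, 'Res[HG1 gT] ('Ind[[set: wreath2 gT]] th)]
    = #|gT|%:R^-1 * \sum_(g : gT) xi g * (th (dg g))^*.
Proof.
move=> e1 Hphi; rewrite cfdotE (big_setID (KG gT)) /=.
rewrite [X in _ + X]big1 ?addr0; last first.
  move=> x /setDP[xH xK]; rewrite cfResE ?subsetT // Ind_out //.
  by rewrite rmorph0 mulr0.
rewrite HK_dg big_imset /=; last by move=> a b _ _; apply: dg_inj.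
rewrite (eq_bigr (fun g => 2 * (xi g * (th (dg g))^*))); last first.
  move=> g _; rewrite cfResE ?subsetT //; last first.
    by rewrite inE /= !ffunE.
  rewrite Ind_dg Hphi; last by rewrite inE /= !ffunE.
  rewrite /= ffunE e1 mulr1 rmorphM /= rmorph_nat.
  by rewrite mulrCA.
rewrite -mulr_sumr cardH natrM invfM -mulrA mulrCA mulKf //.
by rewrite pnatr_eq0.
Qed.

Lemma irr_dot_le1 (gT : finGroupType) (G : {group gT}) (u v : 'CF(G)) :
  u \in irr G -> v \in irr G -> '[u, v] <= 1.
Proof.
move=> /irrP[i ->] /irrP[j ->]; rewrite cfdot_irr.
by case: (i == j); rewrite ?ler01 ?lexx.
Qed.

Lemma bound_key (gT : finGroupType) (xi : 'CF([set: gT])) (t : Iirr (KG gT)) :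
  xi \is a linear_char ->
  #|gT|%:R^-1 * \sum_(g : gT) xi g * ('chi_t (dg g))^* <= 1.
Proof.
move=> Lxi.
have KxK := K1xK2 gT.
rewrite -(inv_dprod_IirrK KxK t); case: (inv_dprod_Iirr KxK t) => a b.
rewrite dprod_IirrE.
pose al := cfIsom (iso1 gT) 'chi_a.
pose be := cfIsom (iso2 gT) 'chi_b.
have alE g : al g = 'chi_a (e1 g).
  have -> : g = p0m gT (e1 g) by rewrite /= ffunE eqxx.
  by rewrite cfIsomE ?e1K1 //= ffunE eqxx.
have beE g : be g = 'chi_b (e2 g).
  have -> : g = p1m gT (e2 g) by rewrite /= ffunE.
  by rewrite cfIsomE ?e2K2 //= ffunE.
have alI : al \in irr [set: gT] by rewrite cfIsom_irr mem_irr.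
have beI : be \in irr [set: gT] by rewrite cfIsom_irr mem_irr.
have -> : #|gT|%:R^-1 * \sum_(g : gT) xi g * ((cfDprod KxK 'chi_a 'chi_b) (dg g))^*
    = '[xi * (al^*)%CF, be].
  rewrite cfdotE cardsT; congr (_ * _).
  rewrite [RHS](eq_bigl (fun _ => true)) => [|x]; last by rewrite inE.
  apply: eq_bigr => g _.
  rewrite dg_e cfDprodE ?e1K1 ?e2K2 // !cfunE ?cfConjCE alE beE rmorphM /=.
  by rewrite mulrA.
apply: irr_dot_le1 => //.
apply: mul_lin_irr => //.
by case/irrP: alI => i ->; apply: cfConjC_irr.
Qed.

Lemma phi_char (gT : finGroupType) (xi : 'CF([set: gT]))
    (eps : 'S_2 -> algC) (phi : 'CF(HG1 gT)) :
  xi \is a linear_char ->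
  eps = trivial_S2 \/ eps = sign_S2 ->
  (forall x : wreath2 gT, x \in HG1 gT -> phi x = xi (x.1 ord0) * eps x.2) ->
  phi \is a character.
Proof.
move=> Lxi Heps Hphi.
have eps1 : eps 1%g = 1 by case: Heps => ->; rewrite /trivial_S2 /sign_S2 ?odd_perm1.
have epsM s t : eps (s * t)%g = eps s * eps t.
  by case: Heps => ->; rewrite /trivial_S2 /sign_S2 ?mulr1 ?odd_permM ?signr_addb.
have phiM : {in HG1 gT &, {morph phi : x y / (x * y)%g >-> x * y}}.
  move=> x y xH yH; rewrite Hphi ?groupM // Hphi // Hphi //.
  rewrite wmulE1 wmulE2 epsM lin_charM ?inE //.
  have -> : y.1 ((x.2^-1)%g ord0) = y.1 ord0.
    move: yH; rewrite inE => /eqP yc.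
    by case: (ord2_cases ((x.2^-1)%g ord0)) => ->.
  by rewrite -!mulrA; congr (_ * _); rewrite mulrCA (mulrC (eps y.2)) [RHS]mulrCA mulrA.
have phi1 : phi 1%g = 1.
  by rewrite Hphi ?group1 // wone1 wone2 eps1 lin_char1 ?mulr1.
pose r := fun x => (phi x)%:M : 'M[algC]_1.
have rR : mx_repr (HG1 gT) r.
  split; first by rewrite /r phi1.
  by move=> x y xH yH; rewrite /r phiM // scalar_mxM.
have -> : phi = cfRepr (MxRepresentation rR).
  apply/cfunP=> x; rewrite cfunE /=.
  case xH: (x \in HG1 gT); last by rewrite cfun0 ?xH.
  by rewrite mxtrace_scalar.
exact: cfRepr_char.
Qed.

Unset Implicit Arguments. Set Strict Implicit.

Theorem proposition3p3 (gT : finGroupType) (xi : 'CF([set: gT]))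
    (eps : 'S_2 -> algC) (phi : 'CF(HG1 gT)) :
  xi \is a linear_char ->
  eps = trivial_S2 \/ eps = sign_S2 ->
  (forall x : wreath2 gT, x \in HG1 gT -> phi x = xi (x.1 ord0) * eps x.2) ->
  forall i : Iirr [set: wreath2 gT],
    '['Ind[[set: wreath2 gT]] phi, 'chi_i] <= 1.
Proof.
move=> Lxi Heps Hphi i.
have eps1 : eps 1%g = 1 by case: Heps => ->; rewrite /trivial_S2 /sign_S2 ?odd_perm1.
have Nphi := phi_char Lxi Heps Hphi.
set Psi := 'Ind[[set: wreath2 gT]] phi.
have NPsi : Psi \is a character by apply: cfInd_char.
have [t tC] := neq0_has_constt (Res_irr_neq0 (KG gT) i).
have nat1 j : '[Psi, 'chi_j] \in Num.nat by apply: Cnat_cfdot_char_irr.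
have nat2 j : '['Res[KG gT] 'chi[[set: wreath2 gT]]_j, 'chi_t] \in Num.nat.
  by apply: Cnat_cfdot_char_irr; apply: cfRes_char; apply: irr_char.
have ge1 : 1 <= '['Res[KG gT] 'chi[[set: wreath2 gT]]_i, 'chi_t].
  move: tC; rewrite irr_consttE; case/natrP: (nat2 i) => n ->.
  by rewrite pnatr_eq0 ler1n lt0n.
apply: le_trans (bound_key t Lxi).
rewrite -(@dot_key _ _ _ _ 'chi_t eps1 Hphi) Frobenius_reciprocity -/Psi -cfdot_Res_l.
rewrite {2}[Psi]cfun_sum_cfdot rmorph_sum /= cfdot_suml (bigD1 i) //=.
rewrite linearZ /= cfdotZl.
apply: le_trans (ler_peMr (natr_ge0 (nat1 i)) ge1) _.
rewrite -[X in _ <= X + _]/('[Psi, 'chi_i] * '['Res[KG gT] 'chi_i, 'chi_t]) lerDl.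
rewrite sumr_ge0 // => j _.
by rewrite linearZ /= cfdotZl mulr_ge0 // natr_ge0.
Qed.
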